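(* Let $(\Lambda,d)$ be a finitely aligned $k$-graph and give $X_\Lambda$ the topology generated by the subbasis $\{D_G,X_\Lambda\setminus D_G:G\in S_\Lambda\}$. Then $D_F$ is compact for each $F\in S_\Lambda$.
   Context: A $k$-graph $(\Lambda,d)$ is a countable small category $\Lambda$ (objects identified with identity morphisms) with a functor $d:\Lambda\to\mathbb N^k$ satisfying unique factorization: whenever $d(\lambda)=m+n$ there are unique $\mu,\nu$ with $d(\mu)=m$, $d(\nu)=n$, $\lambda=\mu\nu$. $r,s$ range/source. $\Lambda^{\min}(\lambda,\mu)=\{(\alpha,\beta):\lambda\alpha=\mu\beta,\ d(\lambda\alpha)=d(\lambda)\vee d(\mu)\}$; finitely aligned means all are finite. $S_\Lambda$ is the set of finite $F\subseteq\{(\lambda,\mu):s(\lambda)=s(\mu)\}$ such that distinct $(\lambda,\mu),(\nu,\omega)\in F$ satisfy $\Lambda^{\min}(\lambda,\nu)=\Lambda^{\min}(\mu,\omega)=\emptyset$. $\Omega_{k,m}$ ($m\in(\mathbb N\cup\{\infty\})^k$): objects $\{p\in\mathbb N^k:p\le m\}$, morphisms $(p,q)$ with $p\le q\le m$, $r(p,q)=p$, $s(p,q)=q$, $d(p,q)=q-p$. $X_\Lambda$ = all degree-preserving functors $x:\Omega_{k,m}\to\Lambda$; $d(x)=m$. $D_F=\{x\in X_\Lambda:\exists(\lambda,\mu)\in F,\ d(\mu)\le d(x),\ x(0,d(\mu))=\mu\}$. *)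

(* Defs.v *)
From Stdlib Require Import List.
From mathcomp Require Import all_boot.
Set Implicit Arguments. Unset Strict Implicit. Unset Printing Implicit Defensive.

Definition NN (k : nat) := 'I_k -> nat.
Definition nle k (p q : NN k) : Prop := forall i, p i <= q i.
Definition nadd k (p q : NN k) : NN k := fun i => p i + q i.
Definition nsub k (q p : NN k) : NN k := fun i => q i - p i.
Definition njoin k (p q : NN k) : NN k := fun i => maxn (p i) (q i).
Definition nzero k : NN k := fun _ => 0.
(* (N u {oo})^k : None = infinity *)
Definition NNinf (k : nat) := 'I_k -> option nat.
Definition nleinf k (q : NN k) (m : NNinf k) : Prop :=
  forall i, match m i with None => true | Some n => q i <= n end.

(* A k-graph: countable small category (objects and morphisms countable),
   composition [comp l m] meaningful when [s l = r m], degree functor d,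
   unique factorisation. *)
Record kgraph (k : nat) := KGraph {
  Obj : countType;
  Mor : countType;
  r : Mor -> Obj;
  s : Mor -> Obj;
  ident : Obj -> Mor;
  comp : Mor -> Mor -> Mor;
  deg : Mor -> NN k;
  r_ident : forall v, r (ident v) = v;
  s_ident : forall v, s (ident v) = v;
  r_comp : forall l m, s l = r m -> r (comp l m) = r l;
  s_comp : forall l m, s l = r m -> s (comp l m) = s m;
  comp_identl : forall l, comp (ident (r l)) l = l;
  comp_identr : forall l, comp l (ident (s l)) = l;
  comp_assoc : forall l m n, s l = r m -> s m = r n ->
      comp l (comp m n) = comp (comp l m) n;
  deg_ident : forall v, deg (ident v) = @nzero k;
  deg_comp : forall l m, s l = r m -> deg (comp l m) = nadd (deg l) (deg m);
  unique_fact : forall l (m n : NN k), deg l = nadd m n ->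
      exists! mn : Mor * Mor, s mn.1 = r mn.2 /\ deg mn.1 = m /\
                              deg mn.2 = n /\ l = comp mn.1 mn.2
}.

Section KG.
Variables (k : nat) (L : kgraph k).
Local Notation Mor := (Mor L).
Local Notation d := (@deg k L).

Definition in_min (la mu : Mor) (ab : Mor * Mor) : Prop :=
  s la = r ab.1 /\ s mu = r ab.2 /\
  comp la ab.1 = comp mu ab.2 /\
  d (comp la ab.1) = njoin (d la) (d mu).

Definition finitely_aligned : Prop :=
  forall la mu, exists l : seq (Mor * Mor), forall ab, in_min la mu ab -> ab \in l.

Definition min_empty (la mu : Mor) : Prop := forall ab, ~ in_min la mu ab.

Definition in_S (F : seq (Mor * Mor)) : Prop :=
  (forall lm, lm \in F -> s lm.1 = s lm.2) /\
  (forall lm no, lm \in F -> no \in F -> lm <> no ->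
       min_empty lm.1 no.1 /\ min_empty lm.2 no.2).

(* Path space X_Lambda: degree-preserving functors Omega_{k,m} -> Lambda.
   The morphism (p,q) of Omega_{k,m} (p <= q <= m) is sent to [path p q _ _]. *)
Record XPath := MkXPath {
  xdeg : NNinf k;
  path : forall p q : NN k, nle p q -> nleinf q xdeg -> Mor;
  path_irr : forall p q (H H' : nle p q) (Hm Hm' : nleinf q xdeg),
      path H Hm = path H' Hm';
  path_ident : forall p (H : nle p p) (Hm : nleinf p xdeg),
      exists v, path H Hm = ident v;
  path_deg : forall p q (H : nle p q) (Hm : nleinf q xdeg),
      d (path H Hm) = nsub q p;
  path_comp : forall p q t (Hpq : nle p q) (Hqt : nle q t) (Hpt : nle p t)
      (Hqm : nleinf q xdeg) (Htm : nleinf t xdeg),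
      s (path Hpq Hqm) = r (path Hqt Htm) /\
      path Hpt Htm = comp (path Hpq Hqm) (path Hqt Htm)
}.

Lemma nle0 (p : NN k) : nle (@nzero k) p.
Proof. by move=> i. Qed.

Definition DF (F : seq (Mor * Mor)) (x : XPath) : Prop :=
  exists2 lm, lm \in F &
    exists H : nleinf (d lm.2) (xdeg x), path (nle0 (d lm.2)) H = lm.2.

Definition subbasic (V : XPath -> Prop) : Prop :=
  exists G, in_S G /\
    ((forall x, V x <-> DF G x) \/ (forall x, V x <-> ~ DF G x)).

End KG.

(* Topology generated by a subbasis B: unions of finite intersections. *)
Definition gen_open (X : Type) (B : (X -> Prop) -> Prop) (U : X -> Prop) : Prop :=
  forall x, U x -> exists l : list (X -> Prop),
    (forall V, In V l -> B V) /\ (forall V, In V l -> V x) /\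
    (forall y, (forall V, In V l -> V y) -> U y).

Definition compact_in (X : Type) (isopen : (X -> Prop) -> Prop) (A : X -> Prop) : Prop :=
  forall (I : Type) (U : I -> X -> Prop), (forall i, isopen (U i)) ->
    (forall x, A x -> exists i, U i x) ->
    exists l : list I, forall x, A x -> exists i, In i l /\ U i x.

(* Main.v *)
From Stdlib Require Import List.
Require Import Defs.
From mathcomp Require Import all_boot.
From Stdlib Require Import ClassicalEpsilon FunctionalExtensionality Classical.
From mathcomp Require Import zify.
Set Implicit Arguments. Unset Strict Implicit. Unset Printing Implicit Defensive.

Section KG1.
Variables (k : nat) (L : kgraph k).
Local Notation Mor := (Mor L).
Local Notation d := (@deg k L).
Local Notation cmp := (@Defs.comp k L).

Lemma nadd0l (p : NN k) : nadd (@nzero k) p = p.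
Proof. by apply: functional_extensionality => i. Qed.
Lemma nsub0 (p : NN k) : nsub p (@nzero k) = p.
Proof. by apply: functional_extensionality => i; rewrite /nsub subn0. Qed.
Lemma nsubnn (p : NN k) : nsub p p = @nzero k.
Proof. by apply: functional_extensionality => i; rewrite /nsub subnn. Qed.
Lemma naddsub (p q : NN k) : nle p q -> nadd p (nsub q p) = q.
Proof. by move=> H; apply: functional_extensionality => i; rewrite /nadd /nsub subnKC. Qed.
Lemma naddsub2 (p q t : NN k) : nle p q -> nle q t ->
  nadd (nsub q p) (nsub t q) = nsub t p.
Proof.
move=> H1 H2; apply: functional_extensionality => i; rewrite /nadd /nsub.
have := H1 i; have := H2 i; lia.
Qed.

Lemma deg0_ident (l : Mor) : d l = @nzero k -> l = ident (r l).
Proof.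
move=> H.
have Hd : d l = nadd (@nzero k) (@nzero k).
  by rewrite H; apply: functional_extensionality.
have [[a b] [_ Hu]] := unique_fact Hd.
have E1 := Hu (ident (r l), l).
have E2 := Hu (l, ident (s l)).
have e1 : (ident (r l), l) = (a, b).
  apply: esym; apply: E1; split; first by rewrite s_ident.
  by split; [rewrite deg_ident | split; [rewrite H | rewrite comp_identl]].
have e2 : (l, ident (s l)) = (a, b).
  apply: esym; apply: E2; split; first by rewrite r_ident.
  by split; [rewrite H | split; [rewrite deg_ident | rewrite comp_identr]].
by rewrite -e2 in e1; case: e1.
Qed.

Lemma factor_eq (a b a' b' : Mor) : s a = r b -> s a' = r b' ->
  d a = d a' -> d b = d b' -> cmp a b = cmp a' b' -> a = a' /\ b = b'.
Proof.
move=> H1 H2 Ha Hb Hc.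
have Hd : d (cmp a b) = nadd (d a) (d b) by rewrite deg_comp.
have [[u v] [_ Hu]] := unique_fact Hd.
have e1 : (u, v) = (a, b) by apply: Hu.
have e2 : (u, v) = (a', b') by apply: Hu; rewrite -Ha -Hb -Hc.
by rewrite e1 in e2; case: e2.
Qed.

Definition Z (mu : Mor) (y : XPath L) : Prop :=
  exists H : nleinf (d mu) (xdeg y), Defs.path (nle0 (d mu)) H = mu.

Lemma Z_intro (y : XPath L) mu q (H : nle (@nzero k) q) (Hq : nleinf q (xdeg y)) :
  d mu = q -> Defs.path H Hq = mu -> Z mu y.
Proof.
move=> E; subst q => E; exists Hq; rewrite -{3}E; exact: path_irr.
Qed.

Lemma nleinf_trans (p q : NN k) m : nle p q -> nleinf q m -> nleinf p m.
Proof.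
move=> H1 H2 i; have := H2 i; case: (m i) => // n; exact: leq_trans (H1 i).
Qed.

Lemma Z_prefix (y : XPath L) mu nu : s mu = r nu -> Z (cmp mu nu) y -> Z mu y.
Proof.
move=> Hc [H E].
have Hdc := deg_comp Hc.
have Hle : nle (d mu) (d (cmp mu nu)) by move=> i; rewrite Hdc /nadd leq_addr.
have Hm := nleinf_trans Hle H.
have [Hs Ep] := path_comp (nle0 (d mu)) Hle (nle0 _) Hm H.
exists Hm.
have Hd1 : d (Defs.path (nle0 (d mu)) Hm) = d mu by rewrite path_deg nsub0.
have Hd2 : d (Defs.path Hle H) = d nu.
  rewrite path_deg Hdc; apply: functional_extensionality => i.
  by rewrite /nsub /nadd addKn.
have [] := factor_eq Hs Hc Hd1 Hd2 _ => //.
by rewrite -Ep E.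
Qed.

Lemma Z_join (y : XPath L) mu nu : Z mu y -> Z nu y ->
  exists ab, in_min mu nu ab /\ Z (cmp mu ab.1) y.
Proof.
move=> [H1 E1] [H2 E2].
set q := njoin (d mu) (d nu).
have Hq : nleinf q (xdeg y).
  move=> i; have := H1 i; have := H2 i; rewrite /q /njoin.
  case: (xdeg y i) => // n; rewrite geq_max => -> -> //.
have L1 : nle (d mu) q by move=> i; rewrite /q /njoin leq_maxl.
have L2 : nle (d nu) q by move=> i; rewrite /q /njoin leq_maxr.
have [Hs1 Ep1] := path_comp (nle0 (d mu)) L1 (nle0 q) H1 Hq.
have [Hs2 Ep2] := path_comp (nle0 (d nu)) L2 (nle0 q) H2 Hq.
rewrite E1 in Hs1 Ep1; rewrite E2 in Hs2 Ep2.
exists (Defs.path L1 Hq, Defs.path L2 Hq); split.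
  split; first by [].
  split; first by [].
  split; first by rewrite /= -Ep1 -Ep2.
  by rewrite /= -Ep1 path_deg nsub0.
apply: (@Z_intro y _ q (nle0 q) Hq); last by rewrite /= -Ep1.
by rewrite /= -Ep1 path_deg nsub0.
Qed.

End KG1.

Section Build.
Variables (k : nat) (L : kgraph k) (A : Mor L -> Prop).
Local Notation Mor := (Mor L).
Local Notation d := (@deg k L).
Local Notation cmp := (@Defs.comp k L).
Variable A1 : forall mu nu, s mu = r nu -> A (cmp mu nu) -> A mu.
Variable A2 : forall mu nu, A mu -> A nu -> exists ab, in_min mu nu ab /\ A (cmp mu ab.1).
Variables (mu0 : Mor) (A3 : A mu0).

Lemma Auniq mu nu : A mu -> A nu -> d mu = d nu -> mu = nu.
Proof.
move=> Hm Hn Hd.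
have [[a b] [[/= Ha [Hb [Hc Hj]]] _]] := A2 Hm Hn.
have Hdz (x y : Mor) : s x = r y -> d (cmp x y) = d x -> y = ident (s x).
  move=> Hxy E; rewrite Hxy; apply: deg0_ident; apply: functional_extensionality => i.
  have := f_equal (fun f => f i) E; rewrite deg_comp // /nadd /nzero; lia.
have E1 : d (cmp mu a) = d mu.
  rewrite Hj -Hd; apply: functional_extensionality => i; by rewrite /njoin maxnn.
have E2 : d (cmp nu b) = d nu by rewrite -Hc E1 Hd.
have Ea := Hdz _ _ Ha E1; have Eb := Hdz _ _ Hb E2.
by rewrite -(comp_identr mu) -(comp_identr nu) -Ea -Eb.
Qed.

Lemma Aup mu nu : A mu -> A nu -> exists rho, [/\ A rho, nle (d mu) (d rho) & nle (d nu) (d rho)].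
Proof.
move=> Hm Hn; have [[a b] [[/= Ha [Hb [Hc Hj]]] HA]] := A2 Hm Hn.
exists (cmp mu a); split => // i; rewrite Hj /njoin; [exact: leq_maxl | exact: leq_maxr].
Qed.

Definition Pb (i : 'I_k) (b : nat) :=
  (exists mu, A mu /\ d mu i = b) /\ forall mu, A mu -> d mu i <= b.

Lemma bnd i B : (forall mu, A mu -> d mu i <= B) -> exists b, Pb i b.
Proof.
elim: B => [|B IH] H.
  exists 0; split; last by [].
  by exists mu0; split => //; have := H _ A3; rewrite leqn0 => /eqP.
case: (classic (forall mu, A mu -> d mu i <= B)) => [/IH//|Hn].
have [mu Hmu] : exists mu, ~ (A mu -> d mu i <= B).
  by apply: NNPP => Hc; apply: Hn => mu; apply: NNPP => Hc2; apply: Hc; exists mu.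
exists B.+1; split => //; exists mu.
have Am : A mu by apply: NNPP => Hc; apply: Hmu => /Hc.
split => //; have := H _ Am; have : ~ d mu i <= B by move=> Hc; apply: Hmu.
move/negP; rewrite -ltnNge => Hlt Hle; apply/eqP; rewrite eqn_leq Hle Hlt //.
Qed.

Definition mdeg : NNinf k := fun i =>
  if excluded_middle_informative (exists b, Pb i b)
  then Some (epsilon (inhabits 0) (Pb i)) else None.

Lemma M1 mu : A mu -> nleinf (d mu) mdeg.
Proof.
move=> Hm i; rewrite /mdeg; case: excluded_middle_informative => // He.
by have [_ H] := epsilon_spec (inhabits 0) (Pb i) He; apply: H.
Qed.

Lemma M2 q : nleinf q mdeg -> forall i, exists mu, A mu /\ q i <= d mu i.
Proof.
move=> Hq i; have := Hq i; rewrite /mdeg; case: excluded_middle_informative => He.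
  have [[mu [Hm <-]] _] := epsilon_spec (inhabits 0) (Pb i) He.
  by move=> Hle; exists mu.
move=> _; apply: NNPP => Hc; apply: He; apply: (@bnd i (q i)) => mu Hm.
rewrite leqNgt; apply/negP => Hlt; apply: Hc; exists mu; split => //; exact: ltnW.
Qed.

Lemma Ext q : nleinf q mdeg -> exists rho, A rho /\ nle q (d rho).
Proof.
move=> Hq.
suff HH : forall l : seq 'I_k, exists rho, A rho /\ forall i, i \in l -> q i <= d rho i.
  have [rho [Hr Hl]] := HH (enum 'I_k).
  by exists rho; split => // i; apply: Hl; rewrite mem_enum.
elim=> [|i l [rho [Hr Hl]]]; first by exists mu0.
have [mu [Hm Hi]] := M2 Hq i.
have [rh [H1 H2 H3]] := Aup Hr Hm.
exists rh; split => // j; rewrite in_cons => /orP [/eqP->|Hj].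
  exact: leq_trans Hi (H3 i).
exact: leq_trans (Hl _ Hj) (H2 j).
Qed.

Lemma Seg q : nleinf q mdeg -> exists mu, A mu /\ d mu = q.
Proof.
move=> Hq; have [rho [Hr Hl]] := Ext Hq.
have Hd : d rho = nadd q (nsub (d rho) q) by rewrite naddsub.
have [[a b] [[/= Hab [Ha [Hb E]]] _]] := unique_fact Hd.
exists a; split => //; apply: (A1 Hab); by rewrite -E.
Qed.

Definition seg q := epsilon (inhabits mu0) (fun mu => A mu /\ d mu = q).

Lemma seg_spec q : nleinf q mdeg -> A (seg q) /\ d (seg q) = q.
Proof. move=> Hq; exact: (epsilon_spec (inhabits mu0) (fun mu => A mu /\ d mu = q) (Seg Hq)). Qed.

Definition fac (p q : NN k) := epsilon (inhabits (mu0, mu0))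
  (fun ab => s ab.1 = r ab.2 /\ d ab.1 = p /\ d ab.2 = nsub q p /\ seg q = cmp ab.1 ab.2).

Lemma fac_spec p q : nle p q -> nleinf q mdeg ->
  [/\ s (seg p) = r (fac p q).2, d (fac p q).2 = nsub q p & seg q = cmp (seg p) (fac p q).2].
Proof.
move=> Hpq Hq.
have [Sa Sd] := seg_spec Hq.
have Hp := nleinf_trans Hpq Hq.
have [Spa Spd] := seg_spec Hp.
have Hd : d (seg q) = nadd p (nsub q p) by rewrite naddsub.
have [ab [Hab _]] := unique_fact Hd.
have Hex : exists ab : Mor * Mor, s ab.1 = r ab.2 /\ d ab.1 = p /\ d ab.2 = nsub q p /\ seg q = cmp ab.1 ab.2
  by exists ab.
have [H1 [H2 [H3 H4]]] := epsilon_spec (inhabits (mu0, mu0)) _ Hex.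
rewrite -/(fac p q) in H1 H2 H3 H4.
have E : (fac p q).1 = seg p.
  apply: Auniq; last by rewrite H2 Spd.
    by apply: (A1 H1); rewrite -H4.
  by [].
by rewrite -E; split.
Qed.

Definition pth (p q : NN k) (H : nle p q) (Hm : nleinf q mdeg) : Mor := (fac p q).2.

Lemma pirr : forall p q (H H' : nle p q) (Hm Hm' : nleinf q mdeg), pth H Hm = pth H' Hm'.
Proof. by []. Qed.

Lemma pdeg : forall p q (H : nle p q) (Hm : nleinf q mdeg), d (pth H Hm) = nsub q p.
Proof. by move=> p q H Hm; have [] := fac_spec H Hm. Qed.

Lemma pid : forall p (H : nle p p) (Hm : nleinf p mdeg), exists v, pth H Hm = ident v.
Proof.
move=> p H Hm; exists (r (pth H Hm)); apply: deg0_ident; by rewrite pdeg nsubnn.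
Qed.

Lemma pcomp : forall p q t (Hpq : nle p q) (Hqt : nle q t) (Hpt : nle p t)
      (Hqm : nleinf q mdeg) (Htm : nleinf t mdeg),
      s (pth Hpq Hqm) = r (pth Hqt Htm) /\
      pth Hpt Htm = cmp (pth Hpq Hqm) (pth Hqt Htm).
Proof.
move=> p q t Hpq Hqt Hpt Hqm Htm; rewrite /pth.
have [S1 D1 E1] := fac_spec Hpq Hqm.
have [S2 D2 E2] := fac_spec Hqt Htm.
have [S3 D3 E3] := fac_spec Hpt Htm.
have Sx : s (fac p q).2 = r (fac q t).2 by rewrite -S2 E1 s_comp.
split => //.
have E : cmp (seg p) (fac p t).2 = cmp (seg p) (cmp (fac p q).2 (fac q t).2).
  by rewrite -E3 E2 E1 comp_assoc.
have [] := factor_eq S3 _ erefl _ E => //.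
  by rewrite r_comp.
by rewrite deg_comp // D1 D2 D3 naddsub2.
Qed.

Definition xb : XPath L := @MkXPath k L mdeg pth pirr pid pdeg pcomp.

Lemma Z_xb mu : Z mu xb <-> A mu.
Proof.
have P0 q (Hq : nleinf q mdeg) : (fac (@nzero k) q).2 = seg q.
  have [S D E] := fac_spec (nle0 q) Hq.
  have [As Ds] := seg_spec (nleinf_trans (nle0 q) Hq).
  have Ei := deg0_ident Ds.
  have : seg (@nzero k) = ident (r (fac (@nzero k) q).2).
    by rewrite -S {2}Ei s_ident.
  by move=> Ei2; rewrite E Ei2 comp_identl.
split.
  move=> [H E]; rewrite /= /pth P0 // in E.
  by have [] := seg_spec H; rewrite E.
move=> Hm; exists (M1 Hm); rewrite /= /pth P0; last exact: M1.
have [] := seg_spec (M1 Hm) => Sa Sd; exact: Auniq.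
Qed.

End Build.
Section Diag.
Variables (X : Type) (Q : nat -> X -> Prop) (xs : nat -> X).

Definition agree (c : seq bool) (y : X) :=
  forall j, j < size c -> (Q j y <-> nth false c j = true).
Definition good (c : seq bool) := forall N, exists2 n, N <= n & agree c (xs n).

Lemma good_ext c : good c -> good (rcons c true) \/ good (rcons c false).
Proof.
move=> G; apply: NNPP => Hn.
have [N1 H1] : exists N1, forall n, N1 <= n -> ~ agree (rcons c true) (xs n).
  apply: NNPP => Hc; apply: Hn; left => N; apply: NNPP => Hc2; apply: Hc.
  by exists N => n Hn' Ha; apply: Hc2; exists n.
have [N2 H2] : exists N2, forall n, N2 <= n -> ~ agree (rcons c false) (xs n).
  apply: NNPP => Hc; apply: Hn; right => N; apply: NNPP => Hc2; apply: Hc.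
  by exists N => n Hn' Ha; apply: Hc2; exists n.
have [n Hn' Ha] := G (maxn N1 N2).
have HA (b : bool) : (Q (size c) (xs n) <-> b = true) -> agree (rcons c b) (xs n).
  move=> Hb j; rewrite size_rcons ltnS leq_eqVlt => /orP [/eqP->|Hj].
    by rewrite nth_rcons ltnn eqxx.
  by rewrite nth_rcons Hj; apply: Ha.
case: (classic (Q (size c) (xs n))) => Hq.
  by apply: (H1 n); [exact: leq_trans (leq_maxl _ _) Hn' | apply: HA].
apply: (H2 n); [exact: leq_trans (leq_maxr _ _) Hn' | apply: HA; split=> //].
Qed.

Definition dec (P : Prop) : bool := if excluded_middle_informative P then true else false.

Fixpoint pre (J : nat) : seq bool :=
  if J is J'.+1 then rcons (pre J') (dec (good (rcons (pre J') true))) else [::].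

Lemma size_pre J : size (pre J) = J.
Proof. by elim: J => //= J IH; rewrite size_rcons IH. Qed.

Lemma good_pre J : good (pre J).
Proof.
elim: J => [|J IH] /=.
  by move=> N; exists N => // j.
rewrite /dec; case: excluded_middle_informative => // Hn.
by case: (good_ext IH).
Qed.

Lemma nth_pre j J : j < J -> nth false (pre J) j = nth false (pre j.+1) j.
Proof.
elim: J => // J IH; rewrite ltnS leq_eqVlt => /orP [/eqP->|Hj] //.
by rewrite /= nth_rcons size_pre Hj IH.
Qed.

Definition chi (j : nat) : bool := nth false (pre j.+1) j.

Lemma diag J N : exists2 n, N <= n & forall j, j < J -> (Q j (xs n) <-> chi j = true).
Proof.
have [n Hn Ha] := good_pre J N; exists n => // j Hj.
by rewrite /chi -(nth_pre Hj); apply: Ha; rewrite size_pre.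
Qed.

End Diag.

Lemma DF_congr k (L : kgraph k) (G : seq (Mor L * Mor L)) (y y' : XPath L) :
  (forall lm, lm \in G -> (Z lm.2 y <-> Z lm.2 y')) -> (DF G y <-> DF G y').
Proof.
move=> H; split=> -[lm Hl Hz]; exists lm => //; by apply/(H _ Hl).
Qed.

Theorem corollary5p8 (k : nat) (L : kgraph k) (Hfa : finitely_aligned L)
  (F : seq (Mor L * Mor L)) (HF : in_S F) :
  compact_in (gen_open (@subbasic k L)) (DF F).
Proof.
move=> I U Hop Hcov.
pose code := seq (seq (Mor L * Mor L) * bool).
pose Bc (c : code) (y : XPath L) := forall Gb, Gb \in c -> (DF Gb.1 y <-> Gb.2 = true).
pose useful (c : code) := exists i, forall y, Bc c y -> U i y.
apply: NNPP => Hno.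
have Hlist : forall n, exists l : list I, forall j (c : code), j < n -> unpickle j = Some c ->
    useful c -> exists i, In i l /\ forall y, Bc c y -> U i y.
  elim=> [|n [l Hl]]; first by exists nil.
  case: (classic (exists c : code, unpickle n = Some c /\ useful c)) => [[c [Hc [i Hi]]]|Hn].
    exists (i :: l) => j c' Hj Hc' Hu.
    move: Hj; rewrite ltnS leq_eqVlt => /orP [/eqP Ej|Hj].
      subst j; rewrite Hc in Hc'; case: Hc' => <-; exists i; split => //; by left.
    have [i' [Hi' Hi'']] := Hl j c' Hj Hc' Hu; exists i'; split => //; by right.
  exists l => j c' Hj Hc' Hu.
  move: Hj; rewrite ltnS leq_eqVlt => /orP [/eqP Ej|Hj].
    by subst j; exfalso; apply: Hn; exists c'.
  exact: (Hl j c' Hj Hc' Hu).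
have claim : forall n, exists y, DF F y /\ forall j (c : code), j <= n ->
    unpickle j = Some c -> useful c -> ~ Bc c y.
  move=> n; apply: NNPP => Hc; apply: Hno.
  have [l Hl] := Hlist n.+1; exists l => x Hx.
  have [j [c [Hj Hc' Hu Hb]]] : exists j (c : code), [/\ j <= n, unpickle j = Some c, useful c & Bc c x].
    apply: NNPP => Hn; apply: Hc; exists x; split => // j c Hj Hc' Hu Hb.
    by apply: Hn; exists j, c.
  have [i [Hi Hi']] := Hl j c Hj Hc' Hu; exists i; split => //; exact: Hi'.
pose xs n := proj1_sig (constructive_indefinite_description _ (claim n)).
have xs_spec n : DF F (xs n) /\ forall j (c : code), j <= n ->
    unpickle j = Some c -> useful c -> ~ Bc c (xs n).
  exact: (proj2_sig (constructive_indefinite_description _ (claim n))).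
pose Q j (y : XPath L) := match (unpickle j : option (Mor L)) with Some mu => Z mu y | None => False end.
pose A (mu : Mor L) := chi Q xs (pickle mu) = true.
have agree : forall (S : seq (Mor L)) N, exists2 n, N <= n & forall mu, mu \in S -> (Z mu (xs n) <-> A mu).
  move=> S N.
  have [n Hn Hd] := diag Q xs (foldr maxn 0 [seq (pickle mu).+1 | mu <- S]) N.
  exists n => // mu Hmu.
  have Hlt : pickle mu < foldr maxn 0 [seq (pickle mu).+1 | mu <- S].
    elim: S Hmu {Hd} => // a S IH; rewrite in_cons /= => /orP [/eqP->|/IH H].
      by rewrite leq_maxl.
    exact: leq_trans H (leq_maxr _ _).
  have := Hd _ Hlt; rewrite /Q pickleK => //.
have A1 : forall mu nu, s mu = r nu -> A (Defs.comp mu nu) -> A mu.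
  move=> mu nu Hc Ha.
  have [n _ Hn] := agree [:: Defs.comp mu nu; mu] 0.
  apply/(Hn mu); first by rewrite !inE eqxx orbT.
  apply: (Z_prefix Hc); apply/(Hn _); first by rewrite !inE eqxx.
  exact: Ha.
have A2 : forall mu nu, A mu -> A nu -> exists ab, in_min mu nu ab /\ A (Defs.comp mu ab.1).
  move=> mu nu Hm Hn'.
  have [l Hl] := Hfa mu nu.
  have [n _ Hn] := agree ([:: mu; nu] ++ [seq Defs.comp mu ab.1 | ab <- l]) 0.
  have Zm : Z mu (xs n) by apply/Hn => //; rewrite !inE eqxx.
  have Zn : Z nu (xs n) by apply/Hn => //; rewrite !inE eqxx orbT.
  have [ab [Hab Hz]] := Z_join Zm Zn.
  exists ab; split => //; apply/Hn => //.
  by rewrite mem_cat; apply/orP; right; apply/mapP; exists ab => //; apply: Hl.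
have [mu0 A3 HxF] : exists2 mu0, A mu0 & exists2 lm, lm \in F & A lm.2.
  have [n _ Hn] := agree [seq lm.2 | lm <- F] 0.
  have [lm Hl Hz] := (xs_spec n).1.
  have Hlm : A lm.2 by apply/(Hn _ _).1 => //; apply/mapP; exists lm.
  by exists lm.2 => //; exists lm.
pose x := xb A1 A2 A3.
have Zx mu : Z mu x <-> A mu by exact: Z_xb.
have Hx : DF F x by have [lm Hl Ha] := HxF; exists lm => //; apply/Zx.
have [i Hi] := Hcov x Hx.
have [l [Hl1 [Hl2 Hl3]]] := Hop i x Hi.
have [c [Hc1 Hc2]] : exists c : code, Bc c x /\ forall y, Bc c y -> forall V, In V l -> V y.
  elim: l Hl1 Hl2 {Hl3} => [|V l IH] H1 H2.
    by exists [::]; split => // y _ V [].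
  have [c [Hc1 Hc2]] := IH (fun W HW => H1 W (or_intror HW)) (fun W HW => H2 W (or_intror HW)).
  have [G [_ HG]] := H1 V (or_introl erefl).
  exists ((G, dec (DF G x)) :: c); split.
    move=> Gb; rewrite in_cons => /orP [/eqP->|/Hc1 //] /=.
    by rewrite /dec; case: excluded_middle_informative.
  move=> y Hy W [<-|HW]; last first.
    by apply: Hc2 HW => Gb HGb; apply: Hy; rewrite in_cons HGb orbT.
  have Hy1 := Hy _ (mem_head _ _); rewrite /= /dec in Hy1.
  have HVx := H2 V (or_introl erefl).
  move: Hy1; case: excluded_middle_informative => HD Hy1; case: HG => HG.
  - by apply/HG/Hy1.
  - by exfalso; exact: ((HG x).1 HVx HD).
  - by exfalso; exact: (HD ((HG x).1 HVx)).
  - by apply/HG => /Hy1.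
have Hu : useful c by exists i => y /Hc2 Hy; apply: Hl3.
have [n Hn Hag] := agree (flatten [seq [seq lm.2 | lm <- Gb.1] | Gb <- c]) (pickle c).
apply: ((xs_spec n).2 (pickle c) c Hn (pickleK c) Hu).
move=> Gb HGb; rewrite -(Hc1 _ HGb); apply: DF_congr => lm Hlm.
rewrite Zx; apply: Hag; apply/flattenP; exists [seq lm.2 | lm <- Gb.1].
  by apply/mapP; exists Gb.
by apply/mapP; exists lm.
Qed.
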